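(* Under a non-stretching curve evolution $\gamma_t=r_0\gamma+r_1\gamma'+r_2\gamma''$ with $r_0=-r_1'-\tfrac13(r_2''+2p_1r_2)$, the invariants $k_1=p_1$, $k_2=p_0-p_1'$ evolve by \[ \begin{pmatrix}k_1\\ k_2\end{pmatrix}_t=\mathcal{P}\begin{pmatrix}r_1\\ r_2\end{pmatrix}, \] where $\mathcal{P}$ is the skew-adjoint matrix differential operator \[ \mathcal{P}=\begin{pmatrix}-2D^3+Dk_1+k_1D & -D^4+D^2k_1+2Dk_2+k_2D\\[2pt] D^4-k_1D^2+2k_2D+Dk_2 & \tfrac23\big(D^5+k_1Dk_1-k_1D^3-D^3k_1\big)+[k_2,D^2]\end{pmatrix}. \]
   Context: Let $\gamma(x,t)$ be a family of nondegenerate (starlike) curves in centroaffine $\mathbb R^3$, each parametrized by centroaffine arclength $x$, i.e. $\det(\gamma,\gamma',\gamma'')=1$, where primes denote $x$-derivatives. Then $\gamma'''=p_0\gamma+p_1\gamma'$ for the Wilczynski invariants $p_0,p_1$. Set $k_1=p_1$, $k_2=p_0-p_1'$. $D$ denotes $\partial/\partial x$, products such as $Dk_1$ mean composition of $D$ with multiplication by $k_1$, and $[\cdot,\cdot]$ is the commutator of operators. *)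

(* Defs.v *)
From Stdlib Require Import Reals List.
From Coquelicot Require Import Coquelicot.
Open Scope R_scope.

Definition fn2 := R -> R -> R.

Definition dX (f : fn2) : fn2 := fun x t => Derive (fun y => f y t) x.
Definition dT (f : fn2) : fn2 := fun x t => Derive (fun s => f x s) t.

Fixpoint pderivs (w : list bool) (f : fn2) : fn2 :=
  match w with
  | nil => f
  | b :: w' => (if b then dT else dX) (pderivs w' f)
  end.

Definition smooth2 (f : fn2) : Prop :=
  forall (w : list bool) (x t : R),
    ex_derive (fun y => pderivs w f y t) x /\
    ex_derive (fun s => pderivs w f x s) t /\
    continuous (fun p : R * R => pderivs w f (fst p) (snd p)) (x, t).

Definition det3 (u v w : nat -> R) : R :=
  u 0%nat * (v 1%nat * w 2%nat - v 2%nat * w 1%nat)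
  - u 1%nat * (v 0%nat * w 2%nat - v 2%nat * w 0%nat)
  + u 2%nat * (v 0%nat * w 1%nat - v 1%nat * w 0%nat).

Definition fadd (f g : fn2) : fn2 := fun x t => f x t + g x t.
Definition fmul (f g : fn2) : fn2 := fun x t => f x t * g x t.
Definition fscal (c : R) (f : fn2) : fn2 := fun x t => c * f x t.
Definition fsub (f g : fn2) : fn2 := fun x t => f x t - g x t.

Definition dX2 (f : fn2) : fn2 := dX (dX f).
Definition dX3 (f : fn2) : fn2 := dX (dX2 f).
Definition dX4 (f : fn2) : fn2 := dX (dX3 f).
Definition dX5 (f : fn2) : fn2 := dX (dX4 f).

Definition P11 (k1 k2 : fn2) (r : fn2) : fn2 :=
  fadd (fadd (fscal (-2) (dX3 r)) (dX (fmul k1 r))) (fmul k1 (dX r)).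
Definition P12 (k1 k2 : fn2) (r : fn2) : fn2 :=
  fadd (fadd (fadd (fscal (-1) (dX4 r)) (dX2 (fmul k1 r)))
             (fscal 2 (dX (fmul k2 r)))) (fmul k2 (dX r)).
Definition P21 (k1 k2 : fn2) (r : fn2) : fn2 :=
  fadd (fadd (fsub (dX4 r) (fmul k1 (dX2 r)))
             (fscal 2 (fmul k2 (dX r)))) (dX (fmul k2 r)).
(* P22 = 2/3 (D^5 + k1 D k1 - k1 D^3 - D^3 k1) + [k2, D^2],
   where [k2, D^2] = k2 D^2 - D^2 k2 *)
Definition P22 (k1 k2 : fn2) (r : fn2) : fn2 :=
  fadd (fscal (2 / 3)
          (fsub (fsub (fadd (dX5 r) (fmul k1 (dX (fmul k1 r))))
                      (fmul k1 (dX3 r)))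
                (dX3 (fmul k1 r))))
       (fsub (fmul k2 (dX2 r)) (dX2 (fmul k2 r))).

(* Main.v *)
Require Import Defs.
From Stdlib Require Import Reals List Lra FunctionalExtensionality Lia.
From Coquelicot Require Import Coquelicot.
Open Scope R_scope.

Lemma pderivs_app w w' f : pderivs (w ++ w') f = pderivs w (pderivs w' f).
Proof. induction w; simpl; [reflexivity| now rewrite IHw]. Qed.

Lemma smooth_dX f : smooth2 f -> smooth2 (dX f).
Proof. intros H w x t. change (dX f) with (pderivs (false::nil) f). rewrite <- pderivs_app. apply H. Qed.
Lemma smooth_dT f : smooth2 f -> smooth2 (dT f).
Proof. intros H w x t. change (dT f) with (pderivs (true::nil) f). rewrite <- pderivs_app. apply H. Qed.

Definition exD (b:bool) (F:fn2) := forall x t,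
  if b then ex_derive (fun s => F x s) t else ex_derive (fun y => F y t) x.
Definition Dir (b : bool) := if b then dT else dX.
Definition contF (F : fn2) := forall x t, continuous (fun p : R * R => F (fst p) (snd p)) (x, t).

Lemma smooth_exD f w b : smooth2 f -> exD b (pderivs w f).
Proof. intros H x t; destruct b; [exact (proj1 (proj2 (H w x t)))|exact (proj1 (H w x t))]. Qed.
Lemma smooth_cont f w : smooth2 f -> contF (pderivs w f).
Proof. intros H x t; exact (proj2 (proj2 (H w x t))). Qed.

Lemma feq (F G : fn2) : (forall x t, F x t = G x t) -> F = G.
Proof. intros H; apply functional_extensionality; intro x; apply functional_extensionality; intro t; apply H. Qed.

Lemma Dir_fadd b F G : exD b F -> exD b G -> Dir b (fadd F G) = fadd (Dir b F) (Dir b G).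
Proof. intros HF HG; apply feq; intros x t; specialize (HF x t); specialize (HG x t);
  destruct b; unfold Dir, dT, dX, fadd; simpl in *.
  - apply (Derive_plus (fun s => F x s) (fun s => G x s)); auto.
  - apply (Derive_plus (fun s => F s t) (fun s => G s t)); auto. Qed.
Lemma Dir_fmul b F G : exD b F -> exD b G ->
  Dir b (fmul F G) = fadd (fmul (Dir b F) G) (fmul F (Dir b G)).
Proof. intros HF HG; apply feq; intros x t; specialize (HF x t); specialize (HG x t);
  destruct b; unfold Dir, dT, dX, fadd, fmul; simpl in *.
  - apply (Derive_mult (fun s => F x s) (fun s => G x s)); auto.
  - apply (Derive_mult (fun s => F s t) (fun s => G s t)); auto. Qed.
Lemma exD_fadd b F G : exD b F -> exD b G -> exD b (fadd F G).
Proof. intros HF HG x t; specialize (HF x t); specialize (HG x t);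
  destruct b; unfold fadd.
  - apply (ex_derive_plus (fun s => F x s) (fun s => G x s)); auto.
  - apply (ex_derive_plus (fun s => F s t) (fun s => G s t)); auto. Qed.
Lemma exD_fmul b F G : exD b F -> exD b G -> exD b (fmul F G).
Proof. intros HF HG x t; specialize (HF x t); specialize (HG x t);
  destruct b; unfold fmul.
  - apply (ex_derive_mult (fun s => F x s) (fun s => G x s)); auto.
  - apply (ex_derive_mult (fun s => F s t) (fun s => G s t)); auto. Qed.
Lemma exD_const b c : exD b (fun _ _ => c).
Proof. intros x t; destruct b; apply ex_derive_const. Qed.
Lemma contF_fadd F G : contF F -> contF G -> contF (fadd F G).
Proof. intros HF HG x t. unfold fadd.
  apply (continuous_plus (fun p : R*R => F (fst p) (snd p)) (fun p : R*R => G (fst p) (snd p))); auto. Qed.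
Lemma contF_fmul F G : contF F -> contF G -> contF (fmul F G).
Proof. intros HF HG x t. unfold fmul.
  apply (continuous_mult (fun p : R*R => F (fst p) (snd p)) (fun p : R*R => G (fst p) (snd p))); auto. Qed.
Lemma contF_const c : contF (fun _ _ => c).
Proof. intros x t; apply continuous_const. Qed.

Lemma pderivs_fadd w f g : smooth2 f -> smooth2 g ->
  pderivs w (fadd f g) = fadd (pderivs w f) (pderivs w g).
Proof. intros Hf Hg; induction w as [|b w IH]; simpl; [reflexivity|].
  rewrite IH. change ((if b then dT else dX) (fadd (pderivs w f) (pderivs w g)) =
     fadd (Dir b (pderivs w f)) (Dir b (pderivs w g))).
  apply Dir_fadd; apply smooth_exD; auto. Qed.

Lemma smooth_fadd f g : smooth2 f -> smooth2 g -> smooth2 (fadd f g).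
Proof. intros Hf Hg w x t. rewrite pderivs_fadd by auto.
  split; [|split].
  - apply (exD_fadd false); apply smooth_exD; auto.
  - apply (exD_fadd true); apply smooth_exD; auto.
  - apply contF_fadd; apply smooth_cont; auto. Qed.

Lemma pderivs_const w c : exists c', pderivs w (fun _ _ => c) = fun _ _ => c'.
Proof. induction w as [|b w [c' IH]]; simpl; [exists c; reflexivity|].
  rewrite IH. exists 0. destruct b; apply feq; intros; unfold dT, dX; apply Derive_const. Qed.

Lemma smooth_const c : smooth2 (fun _ _ => c).
Proof. intros w x t. destruct (pderivs_const w c) as [c' ->].
  split; [apply ex_derive_const|split; [apply ex_derive_const|apply continuous_const]]. Qed.

Fixpoint sumP (f g : fn2) (l : list (list bool * list bool)) : fn2 :=
  match l with
  | nil => fun _ _ => 0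
  | p :: l' => fadd (fmul (pderivs (fst p) f) (pderivs (snd p) g)) (sumP f g l')
  end.
Definition stepL (b : bool) (l : list (list bool * list bool)) :=
  flat_map (fun p => (b :: fst p, snd p) :: (fst p, b :: snd p) :: nil) l.
Fixpoint prodL (w : list bool) : list (list bool * list bool) :=
  match w with nil => (nil, nil) :: nil | b :: w' => stepL b (prodL w') end.

Lemma sumP_exD f g l b : smooth2 f -> smooth2 g -> exD b (sumP f g l).
Proof. intros Hf Hg; induction l; simpl; [apply exD_const|].
  apply exD_fadd; auto; apply exD_fmul; apply smooth_exD; auto. Qed.
Lemma sumP_cont f g l : smooth2 f -> smooth2 g -> contF (sumP f g l).
Proof. intros Hf Hg; induction l; simpl; [apply contF_const|].
  apply contF_fadd; auto; apply contF_fmul; apply smooth_cont; auto. Qed.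

Lemma Dir_sumP f g l b : smooth2 f -> smooth2 g ->
  Dir b (sumP f g l) = sumP f g (stepL b l).
Proof. intros Hf Hg; induction l as [|p l IH]; simpl.
  - destruct b; apply feq; intros; unfold Dir, dT, dX; apply Derive_const.
  - rewrite Dir_fadd; [| apply exD_fmul; apply smooth_exD; assumption | apply sumP_exD; assumption].
    rewrite Dir_fmul; [| apply smooth_exD; assumption | apply smooth_exD; assumption].
    rewrite IH. apply feq; intros x t. unfold stepL. cbn [sumP flat_map fst snd pderivs app].
    unfold fadd, fmul, Dir. ring. Qed.

Lemma pderivs_fmul w f g : smooth2 f -> smooth2 g -> pderivs w (fmul f g) = sumP f g (prodL w).
Proof. intros Hf Hg; induction w as [|b w IH]; simpl.
  - apply feq; intros; unfold fadd, fmul; simpl; ring.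
  - rewrite IH. apply (Dir_sumP f g (prodL w) b); auto. Qed.

Lemma smooth_fmul f g : smooth2 f -> smooth2 g -> smooth2 (fmul f g).
Proof. intros Hf Hg w x t. rewrite pderivs_fmul by auto.
  split; [|split].
  - apply (sumP_exD f g _ false); auto.
  - apply (sumP_exD f g _ true); auto.
  - apply sumP_cont; auto. Qed.

Lemma smooth_fscal c f : smooth2 f -> smooth2 (fscal c f).
Proof. intros H. change (fscal c f) with (fmul (fun _ _ => c) f). apply smooth_fmul; auto; apply smooth_const. Qed.
Lemma fsub_eq f g : fsub f g = fadd f (fscal (-1) g).
Proof. apply feq; intros; unfold fsub, fadd, fscal; ring. Qed.
Lemma smooth_fsub f g : smooth2 f -> smooth2 g -> smooth2 (fsub f g).
Proof. intros; rewrite fsub_eq; apply smooth_fadd; auto; apply smooth_fscal; auto. Qed.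

Lemma dX_fadd f g : smooth2 f -> smooth2 g -> dX (fadd f g) = fadd (dX f) (dX g).
Proof. intros; apply (Dir_fadd false); apply (smooth_exD _ nil); auto. Qed.
Lemma dT_fadd f g : smooth2 f -> smooth2 g -> dT (fadd f g) = fadd (dT f) (dT g).
Proof. intros; apply (Dir_fadd true); apply (smooth_exD _ nil); auto. Qed.
Lemma dX_fmul f g : smooth2 f -> smooth2 g -> dX (fmul f g) = fadd (fmul (dX f) g) (fmul f (dX g)).
Proof. intros; apply (Dir_fmul false); apply (smooth_exD _ nil); auto. Qed.
Lemma dT_fmul f g : smooth2 f -> smooth2 g -> dT (fmul f g) = fadd (fmul (dT f) g) (fmul f (dT g)).
Proof. intros; apply (Dir_fmul true); apply (smooth_exD _ nil); auto. Qed.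
Lemma dX_fscal c f : smooth2 f -> dX (fscal c f) = fscal c (dX f).
Proof. intros H; apply feq; intros x t; unfold dX, fscal; apply (Derive_scal (fun s => f s t)). Qed.
Lemma dT_fscal c f : smooth2 f -> dT (fscal c f) = fscal c (dT f).
Proof. intros H; apply feq; intros x t; unfold dT, fscal; apply (Derive_scal (fun s => f x s)). Qed.
Lemma dX_fsub f g : smooth2 f -> smooth2 g -> dX (fsub f g) = fsub (dX f) (dX g).
Proof. intros; apply feq; intros x t; unfold dX, fsub; apply (Derive_minus (fun s => f s t) (fun s => g s t)); [apply (smooth_exD f nil false)|apply (smooth_exD g nil false)]; auto. Qed.
Lemma dT_fsub f g : smooth2 f -> smooth2 g -> dT (fsub f g) = fsub (dT f) (dT g).
Proof. intros; apply feq; intros x t; unfold dT, fsub; apply (Derive_minus (fun s => f x s) (fun s => g x s)); [apply (smooth_exD f nil true)|apply (smooth_exD g nil true)]; auto. Qed.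

Lemma swapTX f : smooth2 f -> dT (dX f) = dX (dT f).
Proof. intros H; apply feq; intros x t; unfold dT, dX. symmetry. apply Schwarz.
  - exists (mkposreal 1 Rlt_0_1); intros u v _ _.
    split; [|split; [|split]].
    + apply (H nil u v).
    + apply (H nil u v).
    + apply (H (true::nil) u v).
    + apply (H (false::nil) u v).
  - apply continuity_2d_pt_filterlim. apply (H (false::true::nil) x t).
  - apply continuity_2d_pt_filterlim. apply (H (true::false::nil) x t).
Qed.

Ltac sm := match goal with
  | |- smooth2 (fadd _ _) => apply smooth_fadd; sm
  | |- smooth2 (fmul _ _) => apply smooth_fmul; sm
  | |- smooth2 (fsub _ _) => apply smooth_fsub; sm
  | |- smooth2 (fscal _ _) => apply smooth_fscal; sm
  | |- smooth2 (dX _) => apply smooth_dX; sm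
  | |- smooth2 (dT _) => apply smooth_dT; sm
  | |- smooth2 (fun _ _ => _) => apply smooth_const
  | |- smooth2 (dX2 _) => unfold dX2; sm
  | |- smooth2 (dX3 _) => unfold dX3, dX2; sm
  | |- smooth2 _ => assumption
  end.

Ltac step1 H := match type of H with
  | context [dX (fadd ?f ?g)] => rewrite (dX_fadd f g) in H by sm
  | context [dX (fsub ?f ?g)] => rewrite (dX_fsub f g) in H by sm
  | context [dX (fmul ?f ?g)] => rewrite (dX_fmul f g) in H by sm
  | context [dX (fscal ?c ?f)] => rewrite (dX_fscal c f) in H by sm
  | context [dT (fadd ?f ?g)] => rewrite (dT_fadd f g) in H by sm
  | context [dT (fsub ?f ?g)] => rewrite (dT_fsub f g) in H by sm
  | context [dT (fmul ?f ?g)] => rewrite (dT_fmul f g) in H by sm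
  | context [dT (fscal ?c ?f)] => rewrite (dT_fscal c f) in H by sm
  end.
Ltac expandH H := repeat step1 H.
Ltac stepG := match goal with
  | |- context [dX (fadd ?f ?g)] => rewrite (dX_fadd f g) by sm
  | |- context [dX (fsub ?f ?g)] => rewrite (dX_fsub f g) by sm
  | |- context [dX (fmul ?f ?g)] => rewrite (dX_fmul f g) by sm
  | |- context [dX (fscal ?c ?f)] => rewrite (dX_fscal c f) by sm
  | |- context [dT (fadd ?f ?g)] => rewrite (dT_fadd f g) by sm
  | |- context [dT (fsub ?f ?g)] => rewrite (dT_fsub f g) by sm
  | |- context [dT (fmul ?f ?g)] => rewrite (dT_fmul f g) by sm
  | |- context [dT (fscal ?c ?f)] => rewrite (dT_fscal c f) by sm
  end.
Ltac expandG := repeat stepG.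

Definition R0f (p1 r1 r2 : fn2) : fn2 :=
  fsub (fscal (-1) (dX r1)) (fscal (/3) (fadd (dX (dX r2)) (fmul (fscal 2 p1) r2))).

Lemma comp_eq (G p0 p1 r1 r2 : fn2) (HG : smooth2 G) (H0 : smooth2 p0) (H1 : smooth2 p1)
  (Hr1 : smooth2 r1) (Hr2 : smooth2 r2)
  (HW : dX (dX (dX G)) = fadd (fmul p0 G) (fmul p1 (dX G)))
  (HT : dT G = fadd (fadd (fmul (R0f p1 r1 r2) G) (fmul r1 (dX G))) (fmul r2 (dX (dX G)))) :
  dT (dX (dX (dX G))) = dX (dX (dX (dT G))).
Proof.
  rewrite (swapTX (dX (dX G))) by sm. rewrite (swapTX (dX G)) by sm. rewrite (swapTX G) by sm.
  reflexivity.
Qed.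


Definition det3F (A B C : nat -> fn2) : fn2 :=
  fadd (fsub (fmul (A 0%nat) (fsub (fmul (B 1%nat) (C 2%nat)) (fmul (B 2%nat) (C 1%nat))))
             (fmul (A 1%nat) (fsub (fmul (B 0%nat) (C 2%nat)) (fmul (B 2%nat) (C 0%nat)))))
       (fmul (A 2%nat) (fsub (fmul (B 0%nat) (C 1%nat)) (fmul (B 1%nat) (C 0%nat)))).

Lemma comb3 (a b D L0 R0 L1 R1 L2 R2 c0 c1 c2 : R) : D = 1 -> L0 = R0 -> L1 = R1 -> L2 = R2 ->
  (a - b) * D = c0*(L0-R0) + c1*(L1-R1) + c2*(L2-R2) -> a = b.
Proof. intros HD H0 H1 H2 H. subst D L0 L1 L2.
  assert (a - b = 0) by (rewrite <- (Rmult_1_r (a-b)); rewrite H; ring). lra. Qed.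

Lemma comb3n (a b D L0 R0 L1 R1 L2 R2 c0 c1 c2 : R) : D = 1 -> L0 = R0 -> L1 = R1 -> L2 = R2 ->
  (a - b) * D = - (c0*(L0-R0) + c1*(L1-R1) + c2*(L2-R2)) -> a = b.
Proof. intros HD H0 H1 H2 H. subst D L0 L1 L2.
  assert (a - b = 0) by (rewrite <- (Rmult_1_r (a-b)); rewrite H; ring). lra. Qed.

Ltac comp G HG HW HT S0 S1 Hr1 Hr2 x t Ep :=
  let E := fresh "E" in
  unfold R0f in HT;
  pose proof (comp_eq G _ _ _ _ HG S0 S1 Hr1 Hr2 HW HT) as E;
  rewrite HW in E; rewrite HT in E; unfold R0f in E;
  expandH E;
  repeat first [ rewrite HW in E | rewrite (swapTX G HG) in E | rewrite HT in E | progress expandH E];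
  pose proof (f_equal (fun F => F x t) E) as Ep; cbv beta in Ep;
  unfold fadd, fmul, fscal, fsub in Ep; cbv beta in Ep; clear E.

Lemma helper
  (gamma : nat -> R -> R -> R)
  (p0 p1 r1 r2 : R -> R -> R)
  (Hsmooth : forall i : nat, (i < 3)%nat -> smooth2 (gamma i))
  (Hr1 : smooth2 r1) (Hr2 : smooth2 r2)
  (Harc : forall x t : R,
      det3 (fun i => gamma i x t) (fun i => dX (gamma i) x t)
           (fun i => dX2 (gamma i) x t) = 1)
  (Hwil : forall (i : nat) (x t : R), (i < 3)%nat ->
      dX3 (gamma i) x t = p0 x t * gamma i x t + p1 x t * dX (gamma i) x t)
  (Hevol : forall (i : nat) (x t : R), (i < 3)%nat ->
      dT (gamma i) x t =
        (- dX r1 x t - / 3 * (dX2 r2 x t + 2 * p1 x t * r2 x t)) * gamma i x t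
        + r1 x t * dX (gamma i) x t + r2 x t * dX2 (gamma i) x t) :
  forall x t : R,
    dT p1 x t = P11 p1 (fsub p0 (dX p1)) r1 x t + P12 p1 (fsub p0 (dX p1)) r2 x t /\
    dT (fsub p0 (dX p1)) x t = P21 p1 (fsub p0 (dX p1)) r1 x t + P22 p1 (fsub p0 (dX p1)) r2 x t.
Proof.
  assert (Hg0 : smooth2 (gamma 0%nat)) by (apply Hsmooth; lia).
  assert (Hg1 : smooth2 (gamma 1%nat)) by (apply Hsmooth; lia).
  assert (Hg2 : smooth2 (gamma 2%nat)) by (apply Hsmooth; lia).
  assert (Hp1 : p1 = det3F gamma (fun i => dX3 (gamma i)) (fun i => dX2 (gamma i))).
  { apply feq; intros x t. unfold det3F, fadd, fsub, fmul. cbv beta.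
    transitivity (p1 x t * det3 (fun i => gamma i x t) (fun i => dX (gamma i) x t) (fun i => dX2 (gamma i) x t));
      [rewrite Harc; ring|].
    unfold det3. cbv beta.
    rewrite (Hwil 0%nat x t ltac:(lia)), (Hwil 1%nat x t ltac:(lia)), (Hwil 2%nat x t ltac:(lia)). ring. }
  assert (Hp0 : p0 = det3F (fun i => dX3 (gamma i)) (fun i => dX (gamma i)) (fun i => dX2 (gamma i))).
  { apply feq; intros x t. unfold det3F, fadd, fsub, fmul. cbv beta.
    transitivity (p0 x t * det3 (fun i => gamma i x t) (fun i => dX (gamma i) x t) (fun i => dX2 (gamma i) x t));
      [rewrite Harc; ring|].
    unfold det3. cbv beta.
    rewrite (Hwil 0%nat x t ltac:(lia)), (Hwil 1%nat x t ltac:(lia)), (Hwil 2%nat x t ltac:(lia)). ring. }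
  assert (S1 : smooth2 p1) by (rewrite Hp1; unfold det3F; cbv beta; sm).
  assert (S0 : smooth2 p0) by (rewrite Hp0; unfold det3F; cbv beta; sm).
  clear Hp0 Hp1.
  assert (HWi : forall i, (i < 3)%nat -> dX (dX (dX (gamma i))) = fadd (fmul p0 (gamma i)) (fmul p1 (dX (gamma i)))).
  { intros i Hi; apply feq; intros x t; exact (Hwil i x t Hi). }
  assert (HTi : forall i, (i < 3)%nat -> dT (gamma i) =
     fadd (fadd (fmul (R0f p1 r1 r2) (gamma i)) (fmul r1 (dX (gamma i)))) (fmul r2 (dX (dX (gamma i))))).
  { intros i Hi; apply feq; intros x t. rewrite (Hevol i x t Hi).
    unfold R0f, fadd, fmul, fsub, fscal, dX2. ring. }
  pose proof (HWi 0%nat ltac:(lia)) as HW0. pose proof (HWi 1%nat ltac:(lia)) as HW1.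
  pose proof (HWi 2%nat ltac:(lia)) as HW2.
  pose proof (HTi 0%nat ltac:(lia)) as HT0. pose proof (HTi 1%nat ltac:(lia)) as HT1.
  pose proof (HTi 2%nat ltac:(lia)) as HT2.
  clear HWi HTi Hwil Hevol.
  assert (TP1 : forall x t, dT p1 x t = P11 p1 (fsub p0 (dX p1)) r1 x t + P12 p1 (fsub p0 (dX p1)) r2 x t).
  { intros x t.
    comp (gamma 0%nat) Hg0 HW0 HT0 S0 S1 Hr1 Hr2 x t Ep0.
    comp (gamma 1%nat) Hg1 HW1 HT1 S0 S1 Hr1 Hr2 x t Ep1.
    comp (gamma 2%nat) Hg2 HW2 HT2 S0 S1 Hr1 Hr2 x t Ep2.
    unfold P11, P12, dX4, dX3, dX2. expandG.
    unfold fadd, fmul, fscal, fsub. cbv beta.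
    apply (comb3 _ _ _ _ _ _ _ _ _
      (- gamma 1%nat x t * dX (dX (gamma 2%nat)) x t + gamma 2%nat x t * dX (dX (gamma 1%nat)) x t)
      (gamma 0%nat x t * dX (dX (gamma 2%nat)) x t - gamma 2%nat x t * dX (dX (gamma 0%nat)) x t)
      (- gamma 0%nat x t * dX (dX (gamma 1%nat)) x t + gamma 1%nat x t * dX (dX (gamma 0%nat)) x t)
      (Harc x t) Ep0 Ep1 Ep2).
    unfold det3, dX2. cbv beta. field. }
  intros x t. split; [apply TP1|].
  assert (TP1f : dT p1 = fadd (P11 p1 (fsub p0 (dX p1)) r1) (P12 p1 (fsub p0 (dX p1)) r2)) by (apply feq; exact TP1).
  comp (gamma 0%nat) Hg0 HW0 HT0 S0 S1 Hr1 Hr2 x t Ep0.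
  comp (gamma 1%nat) Hg1 HW1 HT1 S0 S1 Hr1 Hr2 x t Ep1.
  comp (gamma 2%nat) Hg2 HW2 HT2 S0 S1 Hr1 Hr2 x t Ep2.
  rewrite (dT_fsub p0 (dX p1)) by sm. rewrite (swapTX p1 S1). rewrite TP1f.
  unfold P11, P12, P21, P22, dX5, dX4, dX3, dX2. expandG.
  unfold fadd, fmul, fscal, fsub. cbv beta.
  apply (comb3 _ _ _ _ _ _ _ _ _
    (dX (gamma 1%nat) x t * dX (dX (gamma 2%nat)) x t - dX (gamma 2%nat) x t * dX (dX (gamma 1%nat)) x t)
    (- (dX (gamma 0%nat) x t * dX (dX (gamma 2%nat)) x t - dX (gamma 2%nat) x t * dX (dX (gamma 0%nat)) x t))
    (dX (gamma 0%nat) x t * dX (dX (gamma 1%nat)) x t - dX (gamma 1%nat) x t * dX (dX (gamma 0%nat)) x t)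
    (Harc x t) Ep0 Ep1 Ep2).
  unfold det3, dX2. cbv beta. field.
Qed.

Theorem mainTheorem1
  (gamma : nat -> R -> R -> R)   (* components gamma 0, gamma 1, gamma 2 of gamma(x,t) in R^3 *)
  (p0 p1 r1 r2 : R -> R -> R)
  (Hsmooth : forall i : nat, (i < 3)%nat -> smooth2 (gamma i))
  (Hr1 : smooth2 r1) (Hr2 : smooth2 r2)
  (Harc : forall x t : R,
      det3 (fun i => gamma i x t) (fun i => dX (gamma i) x t)
           (fun i => dX2 (gamma i) x t) = 1)
  (Hwil : forall (i : nat) (x t : R), (i < 3)%nat ->
      dX3 (gamma i) x t = p0 x t * gamma i x t + p1 x t * dX (gamma i) x t)
  (Hevol : forall (i : nat) (x t : R), (i < 3)%nat ->
      dT (gamma i) x t =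
        (- dX r1 x t - / 3 * (dX2 r2 x t + 2 * p1 x t * r2 x t)) * gamma i x t
        + r1 x t * dX (gamma i) x t + r2 x t * dX2 (gamma i) x t) :
  let k1 := p1 in
  let k2 := fun x t => p0 x t - dX p1 x t in
  forall x t : R,
    dT k1 x t = P11 k1 k2 r1 x t + P12 k1 k2 r2 x t /\
    dT k2 x t = P21 k1 k2 r1 x t + P22 k1 k2 r2 x t.
Proof.
  intros k1 k2 x t.
  exact (helper gamma p0 p1 r1 r2 Hsmooth Hr1 Hr2 Harc Hwil Hevol x t).
Qed.
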